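(* Let $f\geq 1$ be an integer, let $\zeta\in\mathbf{C}$ with $\zeta^f=1$, and let $x\in\mathbf{C}$ with $|x|\geq 1-\frac{1}{2f}$. Set $x'=x-\frac{x^f-1}{fx^{f-1}}$. Then $|x'-\zeta|\leq f|x-\zeta|^2$. *)

(* Defs.v *)
From HB Require Import structures.
From mathcomp Require Import all_boot all_order all_algebra.
From mathcomp Require Import complex.
From mathcomp Require Import reals.

(* Main.v *)
From HB Require Import structures.
From mathcomp Require Import all_boot all_order all_algebra.
From mathcomp Require Import complex.
From mathcomp Require Import reals.
From mathcomp Require Import ring lra zify.
Import Order.TTheory GRing.Theory Num.Theory ComplexField.
Local Open Scope ring_scope.
Lemma bern (R : realFieldType) (t : R) n : 0 <= t -> t <= 1 ->
  1 - n%:R * t <= (1 - t) ^+ n.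
Proof.
move=> t0 t1; elim: n => [|n IH]; first by rewrite expr0 mul0r subr0.
rewrite exprS -natr1.
have h : (1 - n%:R * t) * (1 - t) <= (1 - t) * (1 - t) ^+ n.
  by rewrite mulrC ler_wpM2l // subr_ge0.
have hn : 0 <= n%:R * t * t by rewrite mulr_ge0 // mulr_ge0.
apply: le_trans h; nra.
Qed.

Lemma powbound (R : realFieldType) f (s : R) m : (1 <= f)%N ->
  1 - (2 * f%:R)^-1 <= s -> (m <= f.-1)%N -> s ^+ m <= 2 * s ^+ f.-1.
Proof.
move=> f1 hs hm.
have fpos : (1 : R) <= f%:R by rewrite ler1n.
have hinv : 0 < (2 * f%:R)^-1 :> R by rewrite invr_gt0; lra.
have hinv1 : (2 * f%:R)^-1 <= 2^-1 :> R.
  by rewrite lef_pV2 ?posrE; lra.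
have s0 : 0 <= s by lra.
case: (lerP 1 s) => s1.
  have := ler_weXn2l s1 hm; have := exprn_ge0 f.-1 s0; lra.
have h1 : s ^+ m <= 1 by apply: exprn_ile1 => //; lra.
have hb := @bern R ((2 * f%:R)^-1) f.-1 (ltW hinv) ltac:(lra).
suff : 2^-1 <= s ^+ f.-1 by lra.
have h2 : (1 - (2 * f%:R)^-1) ^+ f.-1 <= s ^+ f.-1.
  by apply: lerXn2r; rewrite ?nnegrE; lra.
apply: le_trans h2; apply: le_trans hb.
have hf : (f.-1)%:R = f%:R - 1 :> R by rewrite -{2}(prednK f1) -natr1 addrK.
rewrite hf.
have -> : (f%:R - 1) * (2 * f%:R)^-1 = 2^-1 - (2 * f%:R)^-1 :> R.
  by field; lra.
lra.
Qed.
Lemma sumn2 f : ((\sum_(i < f) i) * 2 <= f * f)%N.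
Proof.
elim: f => [|f IH]; first by rewrite big_ord0.
rewrite big_ord_recr /= mulnDl.
move: IH; set S := (\sum_(i < f) i)%N; rewrite !mulSn !mulnS; lia.
Qed.

Lemma sumn2C (R : numDomainType) f : (\sum_(i < f) (i%:R : R)) * 2 <= f%:R ^+ 2.
Proof.
rewrite -natr_sum -natrM -natrX ler_nat expnS expn1; exact: sumn2.
Qed.

Local Open Scope complex_scope.

Theorem lemma11 (R : realType) (f : nat) (zeta x : R[i]) :
  (1 <= f)%N ->
  zeta ^+ f = 1 ->
  ((1 - (2 * f%:R)^-1)%:C <= `|x|) ->
  `|(x - (x ^+ f - 1) / (f%:R * x ^+ f.-1)) - zeta| <= f%:R * `|x - zeta| ^+ 2.
Proof.
move=> f1 hz hx.
have [s hs] : exists s : R, `|x| = s%:C by rewrite normc_def; eexists.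
rewrite hs lecR in hx.
have s0 : 0 < s.
  have fpos : (1 : R) <= f%:R by rewrite ler1n.
  have : (2 * f%:R)^-1 <= 2^-1 :> R by rewrite lef_pV2 ?posrE; lra.
  lra.
have pb : forall m, (m <= f.-1)%N -> `|x| ^+ m <= 2 * `|x| ^+ f.-1.
  move=> m hm; rewrite hs -!rmorphXn -(rmorph_nat (real_complex R) 2) -rmorphM lecR.
  exact: powbound.
have x0 : x != 0 by rewrite -normr_gt0 hs ltcR.
have fn0 : (f%:R : R[i]) != 0 by rewrite pnatr_eq0 -lt0n.
have D0 : f%:R * x ^+ f.-1 != 0 by rewrite mulf_neq0 // expf_neq0.
have hz1 : `|zeta| = 1.
  apply/eqP; rewrite -(pexpr_eq1 f1) ?normr_ge0 // -normrX hz normr1 //.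
set d := x - zeta.
set S := \sum_(i < f) x ^+ (f.-1 - i) * zeta ^+ i.
set g := \sum_(i < f) x ^+ (f.-1 - i) * (x ^+ i - zeta ^+ i).
have hS : x ^+ f - 1 = d * S by rewrite -hz subrXX.
have hg : g = f%:R * x ^+ f.-1 - S.
  have -> : f%:R * x ^+ f.-1 = \sum_(i < f) x ^+ f.-1 by rewrite sumr_const card_ord mulr_natl.
  rewrite /g /S -sumrB; apply: eq_bigr => i _.
  rewrite mulrBr -exprD subnK //; have := ltn_ord i; lia.
have key : x - (x ^+ f - 1) / (f%:R * x ^+ f.-1) - zeta
    = d * g / (f%:R * x ^+ f.-1).
  rewrite hS hg /d; field; rewrite fn0 expf_neq0 //.

rewrite key.
have hD : `|f%:R * x ^+ f.-1| = f%:R * `|x| ^+ f.-1 by rewrite normrM normr_nat normrX.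
have Dp : 0 < `|f%:R * x ^+ f.-1| by rewrite normr_gt0.
rewrite normf_div ler_pdivrMr // normrM.
set A := `|d|; set B := 2 * `|x| ^+ f.-1.
have A0 : 0 <= A by exact: normr_ge0.
have hg' : `|g| <= A * B * \sum_(i < f) (i%:R : R[i]).
  apply: le_trans (ler_norm_sum _ _ _) _.
  rewrite mulr_sumr; apply: ler_sum => i _.
  rewrite normrM normrX subrXX normrM -/d -/A.

  have hs' : `|\sum_(j < i) x ^+ (i.-1 - j) * zeta ^+ j| <= \sum_(j < i) `|x| ^+ (i.-1 - j).
    apply: le_trans (ler_norm_sum _ _ _) _; apply: ler_sum => j _.
    by rewrite normrM !normrX hz1 expr1n mulr1.
  have t1 := ler_wpM2l A0 hs'.
  have t0 := exprn_ge0 (f.-1 - i) (normr_ge0 x).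
  have t2 := ler_wpM2l t0 t1.
  apply: le_trans t2 _.
  rewrite mulrCA -[A * B * _]mulrA.

  apply: (ler_wpM2l A0).
  have -> : B * i%:R = \sum_(j < i) B by rewrite sumr_const card_ord mulr_natr.
  rewrite mulr_sumr; apply: ler_sum => j _.
  rewrite -exprD; apply: pb; have := ltn_ord i; have := ltn_ord j; lia.
apply: le_trans (ler_wpM2l A0 hg') _.
have := sumn2C R[i] f.
move=> hT; rewrite hD /B.
have -> : A * (A * (2 * `|x| ^+ f.-1) * \sum_(i < f) (i%:R : R[i]))
   = A ^+ 2 * ((\sum_(i < f) (i%:R : R[i])) * 2 * `|x| ^+ f.-1) by ring.
have -> : f%:R * A ^+ 2 * (f%:R * `|x| ^+ f.-1) = A ^+ 2 * (f%:R ^+ 2 * `|x| ^+ f.-1) by ring.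
apply: ler_wpM2l; first exact: exprn_ge0.
by apply: ler_wpM2r => //; apply: exprn_ge0.
Qed.
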